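(* (1) There is a one-to-one correspondence between finite positive integral frieze patterns of width $2n$ with principal growth coefficient $0$ and positive integral friezes on $P_n^\star$ where $\star$ has order $2$. (2) There is a one-to-one correspondence between finite positive integral frieze patterns of width $3n$ with principal growth coefficient $1$ and positive integral friezes on $P_n^\star$ where $\star$ has order $3$.
   Context: A finite positive integral frieze pattern of width $N$ is a function $F$ on $\{0\le j-i\le N\}$ with $F(i,i)=F(i,i+N)=0$, $F(i,i+1)=F(i,i+N-1)=1$, $F(i,j)F(i+1,j+1)-F(i+1,j)F(i,j+1)=1$ whenever defined, and positive integer entries for $0<j-i<N$. With quiddity $a_i=F(i-1,i+1)$, extend $F$ to all $j\ge i$ by $F(i,i)=0$, $F(i,i+1)=1$, $F(i,j+1)=a_jF(i,j)-F(i,j-1)$ (the tame extension); if $p$ is the minimal period of $(a_i)$, the principal growth coefficient is $F(i,i+p+1)-F(i+1,i+p)$, independent of $i$. Let $\lambda_p=2\cos(\pi/p)$. $P_n^\star$ is a polygon with vertices $v_0,\ldots,v_{n-1}$ and an interior orbifold point $\star$ of order $p$ (the quotient of $P_{pn}$ by rotation through $2\pi/p$). Its arcs are standard arcs $(v_i,v_j)$, $i\ne j$, from $v_i$ to $v_j$ with $v_{i+1},\ldots,v_{j-1}$ on the side not containing $\star$ (boundary segments when $j=i+1$), and pending arcs $(v_i,v_i)$, loops at $v_i$ cutting out a monogon containing $\star$. A frieze on $P_n^\star$ is a function $f$ from arcs to an integral domain with $f=1$ on boundary segments and respecting skein relations: for crossing arcs $\tau,\tau'$, $f(\tau)f(\tau')=f(\Gamma^+)+f(\Gamma^-)$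 where $\Gamma^\pm$ are obtained by the two smoothings of a crossing, $f$ multiplicative on multicurves, self-crossings smoothed recursively, contractible closed curves valued $-2$ and closed curves around $\star$ valued $\lambda_p$ (so $f(v_i,v_i)f(v_j,v_j)=f(v_i,v_j)^2+\lambda_pf(v_i,v_j)f(v_j,v_i)+f(v_j,v_i)^2$ for distinct pending arcs). It is positive integral if all its values are positive integers. *)

(* Defs.v *)
From Stdlib Require Import Rdefinitions Rtrigo_def Rtrigo1.
From HB Require Import structures.
From mathcomp Require Import all_boot all_order all_algebra.
From mathcomp Require Import Rstruct.
Set Implicit Arguments.
Unset Strict Implicit.
Unset Printing Implicit Defensive.
Import Order.TTheory GRing.Theory Num.Theory.
Local Open Scope ring_scope.

(* ---------- Finite positive integral frieze patterns of width N ----------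
   F i j is the entry F(i,j); only pairs with 0 <= j - i <= N carry data,
   and F is normalised to be 0 outside that domain (so that two patterns
   are equal iff they agree on the domain). *)
Definition is_frieze_pattern (N : nat) (F : int -> int -> int) : Prop :=
  [/\ forall i j : int, ~~ ((0 <= j - i) && (j - i <= N%:Z)) -> F i j = 0,
      (forall i : int, F i i = 0 /\ F i (i + N%:Z) = 0),
      (forall i : int, F i (i + 1) = 1 /\ F i (i + N%:Z - 1) = 1),
      (forall i j : int, 1 <= j - i <= N%:Z - 1 ->
          F i j * F (i + 1) (j + 1) - F (i + 1) j * F i (j + 1) = 1)
    & (forall i j : int, 0 < j - i < N%:Z -> 0 < F i j)].

Definition quid (F : int -> int -> int) (i : int) : int := F (i - 1) (i + 1).

(* tame_pair a i k = (E(i,i+k), E(i,i+k+1)) for the tame extension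
   E(i,i) = 0, E(i,i+1) = 1, E(i,j+1) = a_j E(i,j) - E(i,j-1). *)
Fixpoint tame_pair (a : int -> int) (i : int) (k : nat) : int * int :=
  match k with
  | 0%N => (0, 1)
  | k'.+1 => let xy := tame_pair a i k' in
             (xy.2, a (i + Posz k'.+1) * xy.2 - xy.1)
  end.

Definition tame (F : int -> int -> int) (i : int) (k : nat) : int :=
  (tame_pair (quid F) i k).1.

Definition is_period (a : int -> int) (q : nat) : Prop :=
  forall i : int, a (i + q%:Z) = a i.

Definition is_min_period (a : int -> int) (p : nat) : Prop :=
  [/\ (0 < p)%N, is_period a p &
      forall q : nat, (0 < q)%N -> is_period a q -> (p <= q)%N].

(* principal growth coefficient: F(0, p+1) - F(1, p) in the tame
   extension, p the minimal period of the quiddity *)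
Definition has_growth (F : int -> int -> int) (c : int) : Prop :=
  exists p : nat, is_min_period (quid F) p /\ tame F 0 p.+1 - tame F 1 p.-1 = c.

(* ---------- Friezes on P_n^star (star of order p) ----------
   An arc is encoded as (i, k) : 'I_n * 'I_n, meaning the arc starting at
   v_i of "length" k+1: for k+1 < n it is the standard arc (v_i, v_{i+k+1})
   (indices mod n), for k = n-1 it is the pending arc (v_i, v_i).
   Boundary segments are the arcs with k = 0.
   In the orbifold cover P_{pn} the arc (i,k) lifts to the chords
   (i + t n, i + t n + k + 1). *)
Definition orb_arc (n : nat) := ('I_n * 'I_n)%type.

Definition lam (p : nat) : R := 2 * cos (PI / p%:R).

Definition arcv (n : nat) (f : orb_arc n -> R) (i L : nat) : R :=
  match (insub (i %% n)%N : option 'I_n), (insub L.-1 : option 'I_n) with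
  | Some a, Some b => f (a, b)
  | _, _ => 0
  end.

(* value of the generalized arc lifting to the chord (a, a+L) of P_{pn},
   1 <= L < 2n.  For n < L the curve has one self-crossing; smoothing it
   gives the arc (a, a+L-n) together with a loop around star (value lam p)
   plus the arc from v_(a+L-n) of length 2n-L. *)
Definition genv (p n : nat) (f : orb_arc n -> R) (a L : nat) : R :=
  if (L <= n)%N then arcv f a L
  else lam p * arcv f a (L - n) + arcv f (a + L - n) (2 * n - L).

(* skein relations: every crossing of two arcs is a crossing of lifted
   chords (a, a+d), (b, b+e) in P_{pn}, b = a + s, with
   a < b < a+d < b+e < a+pn; smoothing yields (a,b),(a+d,b+e) and
   (b,a+d),(a,b+e). *)
Definition skein (p n : nat) (f : orb_arc n -> R) : Prop :=
  forall (t u : orb_arc n) (s : nat),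
    let i := nat_of_ord t.1 in
    let d := (nat_of_ord t.2).+1 in
    let e := (nat_of_ord u.2).+1 in
    ((i + s) %% n)%N = nat_of_ord u.1 ->
    (0 < s < d)%N -> (d < s + e < p * n)%N ->
    f t * f u = genv p f i s * genv p f (i + d) (s + e - d)
              + genv p f (i + s) (d - s) * genv p f i (s + e).

Definition orb_frieze (p n : nat) (f : orb_arc n -> R) : Prop :=
  [/\ forall t : orb_arc n, nat_of_ord t.2 = 0%N -> f t = 1,
      skein p f
    & forall t : orb_arc n, f t \in Num.nat /\ 0 < f t].
Arguments orb_frieze p n f : clear implicits.

(* Main.v *)
Require Import Defs.
From Stdlib Require Import Rdefinitions.
From Stdlib Require Import Rdefinitions Raxioms RIneq Rtrigo_def Rtrigo1 Rtrigo_calc.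
From Stdlib Require Import ProofIrrelevance FunctionalExtensionality.
From HB Require Import structures.
From mathcomp Require Import all_boot all_order all_algebra.
From mathcomp Require Import Rstruct.
From mathcomp Require Import ring lra zify.
Set Implicit Arguments.
Unset Strict Implicit.
Unset Printing Implicit Defensive.
Import Order.TTheory GRing.Theory Num.Theory.
Local Open Scope ring_scope.

Fixpoint solp (c : int -> int) (x0 x1 : int) (k : nat) : int :=
  match k with
  | 0%N => x0
  | 1%N => x1
  | (k'.+1 as k1).+1 => c (Posz k1) * solp c x0 x1 k1 - solp c x0 x1 k'
  end.
Fixpoint soln (c : int -> int) (x0 x1 : int) (k : nat) : int :=
  match k with
  | 0%N => x0
  | 1%N => c 0 * x0 - x1
  | (k'.+1 as k1).+1 => c (- Posz k1) * soln c x0 x1 k1 - soln c x0 x1 k'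
  end.
Definition sol c x0 x1 (j : int) : int :=
  match j with Posz m => solp c x0 x1 m | Negz m => soln c x0 x1 m.+1 end.

Lemma sol_neg c x0 x1 (m : nat) : sol c x0 x1 (- Posz m) = soln c x0 x1 m.
Proof. by case: m => [|m] //; rewrite -NegzE. Qed.

Lemma solS c x0 x1 (j : int) :
  sol c x0 x1 (j + 1) = c j * sol c x0 x1 j - sol c x0 x1 (j - 1).
Proof.
case: j => [[|k]|k].
- rewrite /=. ring.
- have -> : Posz k.+1 + 1 = Posz k.+2 by rewrite -PoszD addn1.
  have -> : Posz k.+1 - 1 = Posz k by rewrite -addn1 PoszD addrK.
  done.
- rewrite NegzE.
  have -> : - Posz k.+1 + 1 = - Posz k by rewrite -addn1 PoszD opprD addrK.
  have -> : - Posz k.+1 - 1 = - Posz k.+2 by rewrite -(addn1 k.+1) PoszD opprD.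
  rewrite !sol_neg /=. ring.
Qed.

Lemma int_ind2 (P : int -> Prop) : P 0 -> P 1 ->
  (forall j, P (j - 1) -> P j -> P (j + 1)) ->
  (forall j, P j -> P (j + 1) -> P (j - 1)) -> forall j, P j.
Proof.
move=> P0 P1 Hf Hb.
have Hp : forall k : nat, P (Posz k) /\ P (Posz k.+1).
  elim=> [|k [Ha Hb']]; first by split.
  split => //. have := Hf (Posz k.+1).
  have -> : Posz k.+1 + 1 = Posz k.+2 by rewrite -PoszD addn1.
  have -> : Posz k.+1 - 1 = Posz k by rewrite -addn1 PoszD addrK.
  by apply.
have Hn : forall k : nat, P (- Posz k) /\ P (- Posz k + 1).
  elim=> [|k [Ha Hb']]; first by split.
  have e1 : - Posz k.+1 = - Posz k - 1 by rewrite -addn1 PoszD opprD.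
  have e2 : - Posz k.+1 + 1 = - Posz k by rewrite e1 subrK.
  rewrite e2 e1; split => //. exact: Hb.
case=> [k|k]; first by case: (Hp k).
by rewrite NegzE; case: (Hn k.+1).
Qed.

Definition issol (c : int -> int) (y : int -> int) :=
  forall j, y (j + 1) = c j * y j - y (j - 1).

Lemma sol_issol c x0 x1 : issol c (sol c x0 x1).
Proof. move=> j; exact: solS. Qed.

Lemma issol_back c y : issol c y -> forall j, y (j - 1) = c j * y j - y (j + 1).
Proof. move=> h j; rewrite h; ring. Qed.

Lemma sol_uniq c y : issol c y -> y 0 = 0 -> y 1 = 0 -> forall j, y j = 0.
Proof.
move=> h y0 y1; apply: int_ind2 => // j.
- by move=> a b; rewrite h a b; ring.
- by move=> a b; rewrite (issol_back h) a b; ring.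
Qed.

Definition X c := sol c 0 1.
Definition Y c := sol c (-1) 0.
Lemma X0 c : X c 0 = 0. Proof. by []. Qed.
Lemma X1 c : X c 1 = 1. Proof. by []. Qed.
Lemma Y0 c : Y c 0 = -1. Proof. by []. Qed.
Lemma Y1 c : Y c 1 = 0. Proof. by []. Qed.

Lemma sol_repr c y : issol c y -> forall j, y j = y 1 * X c j - y 0 * Y c j.
Proof.
move=> h j.
suff: y j - (y 1 * X c j - y 0 * Y c j) = 0 by move/eqP; rewrite subr_eq0 => /eqP.
apply: (@sol_uniq c (fun j => y j - (y 1 * X c j - y 0 * Y c j))).
- move=> k; rewrite h /X /Y !solS; ring.
- rewrite X0 Y0; ring.
- rewrite X1 Y1; ring.
Qed.

Definition E c (i j : int) := X c i * Y c j - Y c i * X c j.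

Lemma Eii c i : E c i i = 0.
Proof. rewrite /E; ring. Qed.

Lemma XS c j : X c (j + 1) = c j * X c j - X c (j - 1).
Proof. exact: solS. Qed.
Lemma YS c j : Y c (j + 1) = c j * Y c j - Y c (j - 1).
Proof. exact: solS. Qed.

Lemma wronsk c i : E c i (i + 1) = 1.
Proof.
rewrite /E; move: i; apply: int_ind2.
- by rewrite add0r.
- rewrite (XS c 1) (YS c 1) (_ : (1 : int) - 1 = 0) // /X /Y /=; ring.
- move=> j _ H; rewrite -[in RHS]H (XS c (j + 1)) (YS c (j + 1)) addrK; ring.
- move=> j H _; rewrite -[in RHS]H subrK (XS c j) (YS c j); ring.
Qed.

Lemma ES c i j : E c i (j + 1) = c j * E c i j - E c i (j - 1).
Proof. rewrite /E XS YS; ring. Qed.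

Lemma tame_pairE c i k :
  tame_pair c i k = (E c i (i + Posz k), E c i (i + Posz k + 1)).
Proof.
elim: k => [|k IH] /=; first by rewrite addr0 Eii wronsk.
rewrite IH /=.
have e : i + Posz k.+1 = i + Posz k + 1 by rewrite -addn1 PoszD addrA.
by rewrite e [E c i (_ + 1 + 1)]ES addrK.
Qed.

Lemma plucker c a b x d :
  E c a x * E c b d = E c a b * E c x d + E c a d * E c b x.
Proof. rewrite /E; ring. Qed.

Lemma Eanti c i j : E c i j = - E c j i.
Proof. rewrite /E; ring. Qed.

Lemma E0 c j : E c 0 j = X c j.
Proof. rewrite /E X0 Y0; ring. Qed.

Lemma shift_sol c q y : is_period c q -> issol c y -> issol c (fun j => y (j + Posz q)).
Proof.
move=> hp h j /=. rewrite -(hp j) (addrC j 1) -addrA (addrC 1) h.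
by rewrite addrAC.
Qed.

Lemma Xq c q : is_period c q -> forall j,
  X c (j + Posz q) = X c (Posz q + 1) * X c j - X c (Posz q) * Y c j.
Proof.
move=> hp j; have := sol_repr (shift_sol hp (@sol_issol c 0 1)) j.
cbv beta; rewrite add0r (addrC 1); exact.
Qed.
Lemma Yq c q : is_period c q -> forall j,
  Y c (j + Posz q) = Y c (Posz q + 1) * X c j - Y c (Posz q) * Y c j.
Proof.
move=> hp j; have := sol_repr (shift_sol hp (@sol_issol c (-1) 0)) j.
cbv beta; rewrite add0r (addrC 1); exact.
Qed.

Lemma Eshift c q : is_period c q -> forall i j, E c (i + Posz q) (j + Posz q) = E c i j.
Proof.
move=> hp i j; have w := wronsk c (Posz q).
rewrite /E in w *; rewrite (Xq hp i) (Xq hp j) (Yq hp i) (Yq hp j).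
transitivity ((X c i * Y c j - Y c i * X c j) *
  (X c (Posz q) * Y c (Posz q + 1) - Y c (Posz q) * X c (Posz q + 1))); last by rewrite w mulr1.
ring.
Qed.

Definition trq c (q : nat) := X c (Posz q + 1) - Y c (Posz q).

Lemma CH c q y : is_period c q -> issol c y -> forall j,
  y (j + Posz q + Posz q) = trq c q * y (j + Posz q) - y j.
Proof.
move=> hp hy j; have w := wronsk c (Posz q); rewrite /E in w.
have hs := shift_sol hp hy.
have e1 : y (j + Posz q + Posz q) = y (Posz q + 1) * X c (j + Posz q) - y (Posz q) * Y c (j + Posz q).
  by have := sol_repr hs (j + Posz q); cbv beta; rewrite add0r (addrC 1).
have e2 : y (j + Posz q) = y (Posz q + 1) * X c j - y (Posz q) * Y c j.
  by have := sol_repr hs j; cbv beta; rewrite add0r (addrC 1).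
rewrite e1 e2 (Xq hp j) (Yq hp j) (sol_repr hy (Posz q)) (sol_repr hy (Posz q + 1)).
rewrite -[y j]mulr1 -[X in y j * X]w (sol_repr hy j) /trq; ring.
Qed.



Lemma period_mul c q k : is_period c q -> is_period c (k * q)%N.
Proof.
move=> hp; elim: k => [|k IH] i; first by rewrite mul0n addr0.
by rewrite mulSn PoszD addrA IH hp.
Qed.

Lemma period_mod c q m : is_period c q -> is_period c m -> is_period c (m %% q)%N.
Proof.
move=> hq hm i; rewrite -[in RHS](hm i).
have e : Posz m = Posz (m %% q) + Posz (m %/ q * q) by rewrite -PoszD addnC -divn_eq.
by rewrite e addrA (period_mul _ hq).
Qed.



Lemma minp_dvd c p m : is_min_period c p -> is_period c m -> (p %| m)%N.
Proof.
case=> p0 hp hmin hm; rewrite /dvdn; apply/negPn/negP => hne.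
have := hmin _ _ (period_mod hp hm); rewrite lt0n => /(_ hne).
by rewrite leqNgt ltn_mod p0.
Qed.

Lemma GL c q N m : is_period c q -> (0 < q)%N ->
  (forall k : nat, (0 < k < N)%N -> 0 < X c (Posz k)) -> X c (Posz N) = 0 ->
  N = (m * q)%N -> (4 <= m)%N -> False.
Proof.
move=> hp q0 hpos hN eN m4.
set t := trq c q.
pose y k := X c (Posz (k * q)%N).
have yS : forall k, y k.+2 = t * y k.+1 - y k.
  move=> k; rewrite /y (mulSn k.+1) PoszD mulSn PoszD addrA addrC addrA.
  rewrite [Posz q + _]addrC. exact: (CH hp (@sol_issol c 0 1)).
have y0 : y 0%N = 0 by rewrite /y mul0n.
have pos : forall k, (0 < k < m)%N -> 0 < y k.
  move=> k /andP[k0 km]; apply: hpos; rewrite eN muln_gt0 k0 q0 /= ltn_pmul2r //.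
have a0 : 0 < y 1%N by apply: pos; rewrite /=; lia.
have hym : y m = 0 by rewrite /y -eN.
have [tle0|tgt0] := lerP t 0.
  have h2 := pos 2%N ltac:(lia); rewrite yS y0 subr0 in h2; nia.
have [t1|tne1] := eqVneq t 1.
  have h3 := pos 3%N ltac:(lia); rewrite !yS y0 t1 !mul1r subr0 subrr in h3; lia.
have t2 : 2 <= t by move: tne1 tgt0 => /eqP; lia.
have inv : forall k, 0 <= y k /\ y 1%N <= y k.+1 - y k.
  elim=> [|k [IH1 IH2]]; first by rewrite y0 subr0.
  split; first by lia.
  rewrite yS.
  nia.
case: m m4 eN hym pos => [|m] // m4 eN hym pos.
have [h1 h] := inv m; rewrite hym in h; lia.
Qed.

Lemma decompX c i u : X c u = E c u (i + 1) * X c i + E c i u * X c (i + 1).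
Proof. transitivity (E c i (i + 1) * X c u); first by rewrite wronsk mul1r.
rewrite /E; ring. Qed.
Lemma decompY c i u : Y c u = E c u (i + 1) * Y c i + E c i u * Y c (i + 1).
Proof. transitivity (E c i (i + 1) * Y c u); first by rewrite wronsk mul1r.
rewrite /E; ring. Qed.

Definition anti c (N : int) := forall j, X c (j + N) = - X c j /\ Y c (j + N) = - Y c j.

Lemma anti_of_E c (N : int) : (forall i, E c i (i + N) = 0) ->
  (forall i, E c (i + 1) (i + N) = 1) -> anti c N.
Proof.
move=> h0 h1 j; rewrite (decompX c j (j + N)) (decompY c j (j + N)) h0.
rewrite Eanti h1; split; ring.
Qed.

Lemma anti_E c N : anti c N -> forall i j, E c i (j + N) = - E c i j.
Proof. move=> h i j; rewrite /E; have [-> ->] := h j; ring. Qed.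

Lemma period_of_anti c (N : nat) : anti c (Posz N) -> is_period c N.
Proof.
move=> h j.
have hx := XS c (j + Posz N); have hy := YS c (j + Posz N).
have e1 : j + Posz N + 1 = (j + 1) + Posz N by rewrite addrAC.
have e2 : j + Posz N - 1 = (j - 1) + Posz N by rewrite addrAC.
rewrite e1 e2 in hx hy.
have [hx1 hy1] := h (j + 1); have [hx2 hy2] := h (j - 1); have [hx3 hy3] := h j.
rewrite hx1 hx2 hx3 XS in hx; rewrite hy1 hy2 hy3 YS in hy.
have w := wronsk c j; rewrite /E in w.
apply/eqP; rewrite -subr_eq0; apply/eqP.
rewrite -[LHS]mulr1 -w.
have hx' : (c (j + Posz N) - c j) * X c j = 0.
  transitivity (- (c j * X c j - X c (j - 1)) - (c (j + Posz N) * - X c j - - X c (j - 1))); first ring.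
  by rewrite hx subrr.
have hy' : (c (j + Posz N) - c j) * Y c j = 0.
  transitivity (- (c j * Y c j - Y c (j - 1)) - (c (j + Posz N) * - Y c j - - Y c (j - 1))); first ring.
  by rewrite hy subrr.
rewrite mulrBr !mulrA hx' hy' !mul0r subrr //.
Qed.

Lemma trq_anti c (N : nat) : is_period c N -> anti c (Posz N) -> trq c N = -2.
Proof.
move=> _ h; rewrite /trq (addrC (Posz N) 1); have [-> _] := h 1; have [_ ->] := h 0.
by rewrite /X /Y /=.
Qed.

Definition good (p : nat) (lam : int) := (p = 2%N /\ lam = 0) \/ (p = 3%N /\ lam = 1).

Lemma sym_anti c n p lam : is_period c n -> trq c n = lam -> good p lam ->
  anti c (Posz (p * n)%N).
Proof.
move=> hp ht hg j.
have chX := CH hp (@sol_issol c 0 1); have chY := CH hp (@sol_issol c (-1) 0).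
rewrite -/(X c) -/(Y c) ht in chX chY.
case: hg => [[-> hl]|[-> hl]]; rewrite hl in chX chY.
- rewrite mul2n -addnn PoszD addrA.
  split; [move: (chX j) | move: (chY j)]; rewrite mul0r sub0r => h; exact h.
- rewrite (mulSn 2) mul2n -addnn !PoszD !addrA.
  have h1 := chX (j + Posz n); have h2 := chX j; have h3 := chY (j + Posz n); have h4 := chY j.
  rewrite h2 in h1; rewrite h4 in h3; rewrite !mul1r in h1 h3.
  split; [move: h1 | move: h3] => ->; ring.
Qed.

Lemma genv_id c n lam : is_period c n -> trq c n = lam -> forall a L,
  E c a (a + L) = lam * E c a (a + L - Posz n) + E c (a + L - Posz n) (a + Posz n).
Proof.
move=> hp ht a L.
have chX := CH hp (@sol_issol c 0 1) (a + L - Posz n - Posz n);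
have chY := CH hp (@sol_issol c (-1) 0) (a + L - Posz n - Posz n).
rewrite -/(X c) -/(Y c) ht !subrK in chX chY.
have es := Eshift hp a (a + L - Posz n - Posz n); rewrite subrK in es.
have e3 : E c (a + L - Posz n) (a + Posz n) = - E c a (a + L - Posz n - Posz n) by rewrite Eanti es.
rewrite e3 /E chX chY; ring.
Qed.



Lemma fr_rec N F : is_frieze_pattern N F -> forall g : nat, (0 < g)%N -> (g < N)%N ->
  forall i j, j - i = Posz g -> F i (j + 1) + F i (j - 1) = quid F j * F i j.
Proof.
case=> _ h0 h1 hd hpos.
elim=> [//|g IH] _ gN i j hij.
case: g IH gN hij => [|g] IH gN hij.
  have -> : j = i + 1 by lia.
  rewrite /quid addrK (h1 i).1 mulr1 (h0 i).1 addr0 -addrA.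
  done.
have D1 := hd i j ltac:(lia).
have D2 := hd i (j - 1) ltac:(lia).
have P := hpos (i + 1) j ltac:(lia).
have IH' := IH isT ltac:(lia) (i + 1) j ltac:(lia).
rewrite subrK in D2.
apply: (mulfI (lt0r_neq0 P)).
have e : F i j * (F (i + 1) (j + 1) + F (i + 1) (j - 1)) - F (i + 1) j * (F i (j + 1) + F i (j - 1))
  = (F i j * F (i + 1) (j + 1) - F (i + 1) j * F i (j + 1)) -
    (F i (j - 1) * F (i + 1) j - F (i + 1) (j - 1) * F i j) by ring.
rewrite D1 D2 subrr IH' in e; move/eqP: e; rewrite subr_eq0 => /eqP <-; ring.
Qed.

Lemma fr_E N F : is_frieze_pattern N F -> (0 < N)%N ->
  forall i j, 0 <= j - i <= Posz N -> F i j = E (quid F) i j.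
Proof.
move=> hF N0; have hF' := hF; case: hF' => _ h0 h1 hd hpos.
have key : forall g : nat, (g < N)%N ->
  (forall i j, j - i = Posz g -> F i j = E (quid F) i j) /\
  (forall i j, j - i = Posz g.+1 -> F i j = E (quid F) i j).
  elim=> [|g IH] gN.
    split=> i j hij.
      have -> : j = i by lia.
      by rewrite (h0 i).1 Eii.
    have -> : j = i + 1 by lia.
    by rewrite (h1 i).1 wronsk.
  have [IH1 IH2] := IH ltac:(lia); split => // i j hij.
  have -> : j = (j - 1) + 1 by rewrite subrK.
  have r := @fr_rec _ _ hF g.+1 isT gN i (j - 1) ltac:(lia).
  rewrite -[F i (j - 1 + 1)](addrK (F i (j - 1 - 1))) r ES (IH2 i (j - 1)); last by lia.
  by rewrite (IH1 i (j - 1 - 1)) //; lia.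
move=> i j /andP[a b].
have [g hg] : exists g : nat, j - i = Posz g by exists `|j - i|%N; lia.
have [gN|gN] := ltnP g N.
  by have [k _] := key g gN; apply: k.
have gN' : g = N by lia.
have [_ k] := key N.-1 ltac:(lia); apply: k; lia.
Qed.

Lemma fr_anti N F : is_frieze_pattern N F -> (0 < N)%N -> anti (quid F) (Posz N).
Proof.
move=> hF N0; have hF' := hF; case: hF' => _ h0 h1 hd hpos.
apply: anti_of_E => i.
  by rewrite -(fr_E hF) //; [exact: (h0 i).2 | lia].
rewrite -(fr_E hF) //; last by lia.
have -> : i + Posz N = i + 1 + Posz N - 1 by rewrite addrAC addrK.
exact: (h1 _).2.
Qed.

Lemma fr_pos N F : is_frieze_pattern N F -> (0 < N)%N ->
  forall i j, 0 < j - i < Posz N -> 0 < E (quid F) i j.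
Proof.
move=> hF N0 i j h; rewrite -(fr_E hF) //; last by lia.
by case: hF => _ _ _ _ hp; apply: hp.
Qed.

Lemma tameE F i k : tame F i k = E (quid F) i (i + Posz k).
Proof. by rewrite /tame tame_pairE. Qed.

Lemma trq_E c q : (0 < q)%N -> trq c q = E c 0 (Posz q + 1) - E c 1 (Posz q).
Proof. move=> _; rewrite E0 /trq /E X1 Y1; ring. Qed.

Lemma lhs_period p lam n F : good p lam -> (0 < n)%N ->
  is_frieze_pattern (p * n)%N F -> has_growth F lam ->
  is_period (quid F) n /\ trq (quid F) n = lam.
Proof.
move=> hg n0 hF [p0 [hmin hgr]].
have N0 : (0 < p * n)%N by case: hg => [[-> _]|[-> _]]; rewrite muln_gt0 n0.
have hmin' := hmin; case: hmin' => p00 hp0 _.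
have ht : trq (quid F) p0 = lam.
  rewrite -hgr !tameE trq_E // add0r; congr (_ - _); first by rewrite addrC.
  by case: p0 p00 {hmin hgr hp0} => // p0 _; congr E; lia.
have ha := fr_anti hF N0.
have hpN := period_of_anti ha.
have /dvdnP [m hm] := minp_dvd hmin hpN.
have hposX : forall k : nat, (0 < k < p * n)%N -> 0 < X (quid F) (Posz k).
  by move=> k hk; rewrite -E0; apply: (fr_pos hF N0); lia.
have hXN : X (quid F) (Posz (p * n)) = 0.
  by rewrite -E0 -(fr_E hF) //; [case: hF => _ h0 _ _ _; have := (h0 0).2; rewrite add0r | lia].
have m4 : (m < 4)%N.
  rewrite ltnNge; apply/negP => m4; exact: (GL hp0 p00 hposX hXN hm m4).
have ch := CH hp0 (@sol_issol (quid F) 0 1) 0; rewrite -/(X (quid F)) add0r ht X0 subr0 in ch.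
have ep : p0 = n.
  clear hgr; case: hg => [[? hl]|[? hl]]; subst p; rewrite hl in ht ch;
    case: m hm m4 => [|[|[|[|m]]]] // hm _.
  - by move: N0; rewrite hm.
  - exfalso; have := trq_anti hpN ha; rewrite hm mul1n ht //.
  - lia.
  - exfalso; rewrite mul0r in ch.
    have : 0 < X (quid F) (Posz (p0 + p0)) by apply: hposX; rewrite hm; lia.
    by move: ch; rewrite -PoszD => ->; rewrite ltxx.
  - by move: N0; rewrite hm.
  - exfalso; have := trq_anti hpN ha; rewrite hm mul1n ht //.
  - exfalso; rewrite mul1r in ch.
    have : 0 < X (quid F) (Posz p0) by apply: hposX; rewrite hm; lia.
    move: ch; rewrite -PoszD addnn -mul2n -hm hXN => <-; by rewrite ltxx.
  - lia.
by rewrite -ep.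
Qed.



Lemma IZRn (n : nat) : IZR (Z.of_nat n) = n%:R.
Proof. by rewrite -INR_IZR_INZ INRE. Qed.
Lemma lam2 : lam 2 = 0.
Proof. rewrite /lam -(IZRn 2) cos_PI2. by rewrite RmultE mulr0. Qed.
Lemma lam3 : lam 3 = 1.
Proof. rewrite /lam -(IZRn 3) cos_PI3 RmultE RdivE. have -> : IZR 2 = 2%:R by rewrite (IZRn 2).
 by rewrite mul1r divff // pnatr_eq0. Qed.

Lemma lam_good p l : good p l -> lam p = l%:~R.
Proof. by case=> [[-> ->]|[-> ->]]; rewrite ?lam2 ?lam3. Qed.

Lemma arcv_ord n (f : orb_arc n -> R) (x y : 'I_n) (a : nat) :
  (a %% n)%N = x -> arcv f a y.+1 = f (x, y).
Proof.
move=> ha; rewrite /arcv /=.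
have hx : (a %% n < n)%N by rewrite ha ltn_ord.
rewrite (insubT (fun k => k < n)%N hx) (insubT (fun k => k < n)%N (ltn_ord y)).
by congr f; congr pair; apply: val_inj => //=.
Qed.

Definition Rel n (f : orb_arc n -> R) c := forall a L : nat, (0 < L <= n)%N ->
  arcv f a L = (E c (Posz a) (Posz a + Posz L))%:~R.

Lemma genvE p n f c l : (0 < n)%N -> is_period c n -> trq c n = l -> good p l ->
  Rel f c -> forall a L : nat, (0 < L < 2 * n)%N -> @genv p n f a L = (E c (Posz a) (Posz a + Posz L))%:~R.
Proof.
move=> n0 hp ht hg hR a L hL; rewrite /genv.
case: ifP => hLn; first by apply: hR; lia.
rewrite hR; last by lia.
rewrite hR; last by lia.
rewrite (lam_good hg) -intrM -intrD; congr intr.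
rewrite [RHS](genv_id hp ht).
have e1 : Posz a + Posz (L - n) = Posz a + Posz L - Posz n by lia.
have e2 : Posz (a + L - n) = Posz a + Posz L - Posz n by lia.
have e3 : Posz a + Posz L - Posz n + Posz (2 * n - L) = Posz a + Posz n by lia.
by rewrite e1 e2 e3.
Qed.

Lemma skein_of_rel p n f c l : (0 < n)%N -> is_period c n -> trq c n = l -> good p l ->
  Rel f c -> @skein p n f.
Proof.
move=> n0 hp ht hg hR t u s /= hmod /andP[s0 sd] /andP[ds sep].
have hG := genvE n0 hp ht hg hR.
have dn : ((t.2).+1 <= n)%N by exact: ltn_ord.
have en : ((u.2).+1 <= n)%N by exact: ltn_ord.
have ft : f t = arcv f t.1 (t.2).+1.
  by rewrite (@arcv_ord n f t.1 t.2 t.1 (modn_small (ltn_ord _))) -surjective_pairing.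
have fu : f u = arcv f (t.1 + s) (u.2).+1.
  by rewrite (@arcv_ord n f u.1 u.2 (t.1 + s) hmod) -surjective_pairing.
rewrite ft fu !hR; try lia.
rewrite !hG; try lia.
rewrite -!intrM -intrD; congr intr.
set i := t.1; set d := (t.2).+1; set e := (u.2).+1.
have e1 : Posz (i + d)%N + Posz (s + e - d)%N = Posz i + Posz s + Posz e by lia.
have e2 : Posz (i + s)%N + Posz (d - s)%N = Posz i + Posz d by lia.
rewrite e1 e2 !PoszD -!addrA.
rewrite (plucker c (Posz i) (Posz i + Posz s) (Posz i + Posz d) (Posz i + (Posz s + Posz e))).
rewrite !addrA; ring.
Qed.

Definition mkf n (F : int -> int -> int) : orb_arc n -> R :=
  fun t => (F (Posz t.1) (Posz t.1 + Posz t.2 + 1))%:~R.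

Lemma Eshift_mod c n (a : nat) L : is_period c n ->
  E c (Posz (a %% n)%N) (Posz (a %% n)%N + L) = E c (Posz a) (Posz a + L).
Proof.
move=> hp; rewrite -(Eshift (period_mul (a %/ n) hp)).
have -> : Posz (a %% n)%N + Posz (a %/ n * n)%N = Posz a by rewrite -PoszD addnC -divn_eq.
by rewrite addrAC -PoszD addnC -divn_eq.
Qed.

Lemma lhs_orb p l n F : good p l -> (0 < n)%N -> is_frieze_pattern (p * n)%N F ->
  has_growth F l -> orb_frieze p n (@mkf n F).
Proof.
move=> hg n0 hF hgr.
have [hp ht] := lhs_period hg n0 hF hgr.
have p2 : (2 <= p)%N by case: hg => [[-> _]|[-> _]].
have N0 : (0 < p * n)%N by rewrite muln_gt0 n0; lia.
have hFE := fr_E hF N0.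
have nN : (n < p * n)%N by rewrite -{1}(mul1n n) ltn_pmul2r; lia.
have hR : Rel (@mkf n F) (quid F).
  move=> a L hL.
  have hx : (a %% n < n)%N by rewrite ltn_mod.
  have hy : (L.-1 < n)%N by lia.
  have -> : L = (Ordinal hy).+1 by rewrite /=; lia.
  rewrite (@arcv_ord n (@mkf n F) (Ordinal hx) (Ordinal hy) a erefl) /mkf /=.
  rewrite hFE; last by lia.
  rewrite -addrA -(@Eshift_mod _ n a) //; congr (E _ _ _)%:~R; lia.
split.
- move=> t ht0; rewrite /mkf ht0 addr0.
  by case: hF => _ _ h1 _ _; rewrite (h1 _).1.
- exact: skein_of_rel n0 hp ht hg hR.
- move=> t; rewrite /mkf.
  have : 0 < F (Posz t.1) (Posz t.1 + Posz t.2 + 1).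
    case: hF => _ _ _ _ hpos; apply: hpos.
    have := ltn_ord t.2; lia.
  move=> h; split; last by rewrite ltr0z.
  by rewrite natrEint intr_int /= ler0z ltW.
Qed.



Definition mkc n (l : int) (f : orb_arc n -> R) (i : int) : int :=
  if n == 1%N then l else Num.floor (arcv f `|((i - 1) %% Posz n)%Z|%N 2).

Lemma period_int c (n : nat) : is_period c n -> forall (K : int) j, c (j + K * Posz n) = c j.
Proof.
move=> hp [k|k] j.
  by rewrite -PoszM; exact: (period_mul k hp).
rewrite NegzE mulNr -PoszM.
by rewrite -[in RHS](subrK (Posz (k.+1 * n)%N) j) (period_mul k.+1 hp).
Qed.

Lemma mkc_period n l f : (0 < n)%N -> is_period (@mkc n l f) n.
Proof.
move=> n0 i; rewrite /mkc; case: ifP => // _.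
by rewrite addrAC modzDr.
Qed.

Lemma arcv_mod n (f : orb_arc n -> R) a k L : arcv f ((a %% n)%N + k) L = arcv f (a + k) L.
Proof. by rewrite /arcv modnDml. Qed.

Lemma arcv_nat n (f : orb_arc n -> R) a L : (0 < n)%N -> (0 < L <= n)%N ->
  (forall t, f t \in Num.nat /\ 0 < f t) -> arcv f a L \in Num.nat /\ 0 < arcv f a L.
Proof.
move=> n0 hL hf.
have hx : (a %% n < n)%N by rewrite ltn_mod.
have hy : (L.-1 < n)%N by lia.
have -> : L = (Ordinal hy).+1 by rewrite /=; lia.
by rewrite (@arcv_ord n f (Ordinal hx) (Ordinal hy) a erefl).
Qed.

Lemma arcv1 n (f : orb_arc n -> R) a : (0 < n)%N ->
  (forall t : orb_arc n, nat_of_ord t.2 = 0%N -> f t = 1) -> arcv f a 1 = 1.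
Proof.
move=> n0 hb.
have hx : (a %% n < n)%N by rewrite ltn_mod.
by rewrite (@arcv_ord n f (Ordinal hx) (Ordinal n0) a erefl) hb.
Qed.

Lemma genv_small p n (f : orb_arc n -> R) a L : (L <= n)%N -> genv p f a L = arcv f a L.
Proof. by move=> h; rewrite /genv h. Qed.

Lemma arcv_mod0 n (f : orb_arc n -> R) a L : arcv f (a %% n)%N L = arcv f a L.
Proof. by rewrite /arcv modn_mod. Qed.

Lemma E2 c (a : int) : E c a (a + 2) = c (a + 1).
Proof.
have -> : a + 2 = (a + 1) + 1 by rewrite -addrA.
by rewrite ES addrK wronsk Eii mulr1 subr0.
Qed.

Lemma skein_s1 p n (f : orb_arc n -> R) (x y u : 'I_n) : skein p f ->
  ((x + 1) %% n)%N = u -> (0 < y)%N -> (y.+2 < p * n)%N ->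
  f (x, y) * f (u, y) = genv p f x 1 * genv p f (x + y.+1)%N 1
                      + genv p f (x + 1)%N y * genv p f x y.+2.
Proof.
move=> hsk hu y0 hy.
have := hsk (x, y) (u, y) 1%N hu; rewrite /=.
have e1 : (1 + y.+1 - y.+1)%N = 1%N by lia.
have e2 : (y.+1 - 1)%N = y by lia.
rewrite e1 e2 => h; apply: h; lia.
Qed.

Lemma rhs_rel p l n f : good p l -> (0 < n)%N -> orb_frieze p n f -> Rel f (@mkc n l f).
Proof.
move=> hg n0 [hb hsk hpos].
set c := mkc l f.
have p2 : (2 <= p)%N by case: hg => [[-> _]|[-> _]].
have nN : (n < p * n)%N by rewrite -{1}(mul1n n) ltn_pmul2r; lia.
pose rel a L := arcv f a L = (E c (Posz a) (Posz a + Posz L))%:~R.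
suff key : forall k, (k.+1 <= n)%N -> forall a, rel a k.+1 /\ ((k.+2 <= n)%N -> rel a k.+2).
  move=> a [|L] // hL; have [h _] := key L ltac:(lia) a; exact: h.
elim=> [|k IH] hk a.
  split; first by rewrite /rel arcv1 // wronsk.
  move=> h2; rewrite /rel E2 /c /mkc.
  have -> : (n == 1%N) = false by apply/negbTE; lia.
  rewrite addrK modz_nat /= arcv_mod0 floorK //.
  have [h _] := @arcv_nat n f a 2 n0 ltac:(lia) hpos; exact: intr_nat.
have [_ IH2] := IH ltac:(lia) a; split; first exact: IH2 hk.
move=> hk3.
have hx : (a %% n < n)%N by rewrite ltn_mod.
have hy : (k.+1 < n)%N by lia.
have hu : ((a %% n + 1) %% n < n)%N by rewrite ltn_mod.
have sk0 := @skein_s1 p n f (Ordinal hx) (Ordinal hy) (Ordinal hu) hsk erefl (ltn0Sn k) ltac:(simpl; lia).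
have sk : f (Ordinal hx, Ordinal hy) * f (Ordinal hu, Ordinal hy) =
  genv p f (a %% n)%N 1 * genv p f (a %% n + k.+2)%N 1 +
  genv p f (a %% n + 1)%N k.+1 * genv p f (a %% n)%N k.+3 := sk0.
clear sk0.
rewrite !genv_small in sk; try lia.
rewrite -(@arcv_ord n f (Ordinal hx) (Ordinal hy) a erefl) in sk.
rewrite -(@arcv_ord n f (Ordinal hu) (Ordinal hy) (a + 1) (esym (modnDml a 1 n))) in sk.
rewrite !(arcv1 _ n0 hb) mul1r !arcv_mod !arcv_mod0 in sk.
have [IHa _] := IH ltac:(lia) (a + 1)%N.
have [_ IHb] := IH ltac:(lia) (a + 1)%N.
have [_ IHc] := IH ltac:(lia) a.
rewrite /rel in IHa IHb IHc.
rewrite IHa IHc ?IHb in sk; try lia.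
have pl := plucker c (Posz a) (Posz a + 1) (Posz a + Posz k.+2) (Posz a + Posz k.+3).
have C0 : 0 < E c (Posz (a + 1)%N) (Posz (a + 1)%N + Posz k.+1).
  have [_ h] := @arcv_nat n f (a + 1)%N k.+1 n0 ltac:(lia) hpos.
  by rewrite IHa ltr0z in h.
rewrite /rel; apply: (mulfI (x := (E c (Posz (a + 1)%N) (Posz (a + 1)%N + Posz k.+1))%:~R)).
  by rewrite intr_eq0 lt0r_neq0.
have ie : E c (Posz a) (Posz a + Posz k.+2) * E c (Posz (a + 1)%N) (Posz (a + 1)%N + Posz k.+2)
  = 1 + E c (Posz (a + 1)%N) (Posz (a + 1)%N + Posz k.+1) * E c (Posz a) (Posz a + Posz k.+3).
  have e1 : Posz (a + 1)%N = Posz a + 1 by lia.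
  have e2 : Posz a + Posz k.+3 = Posz a + Posz k.+2 + 1 by lia.
  have e3 : Posz a + 1 + Posz k.+1 = Posz a + Posz k.+2 by lia.
  have e4 : Posz a + 1 + Posz k.+2 = Posz a + Posz k.+3 by lia.
  rewrite e1 e3 e4 pl !wronsk e2 wronsk; ring.
move: sk; rewrite -intrM ie intrD mulr1z intrM => /addrI ->; done.
Qed.

Lemma genv_big p n (f : orb_arc n -> R) a L : (n < L)%N ->
  genv p f a L = lam p * arcv f a (L - n) + arcv f (a + L - n) (2 * n - L).
Proof. by move=> h; rewrite /genv leqNgt h. Qed.

Lemma rhs_trq p l n f : good p l -> (0 < n)%N -> orb_frieze p n f -> trq (@mkc n l f) n = l.
Proof.
move=> hg n0 hf; have hR := rhs_rel hg n0 hf; case: hf => hb hsk hpos.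
set c := mkc l f.
have p2 : (2 <= p)%N by case: hg => [[-> _]|[-> _]].
case: n n0 f hb hsk hpos hR @c => [//|[|m]] n0 f hb hsk hpos hR c.
  rewrite trq_E // -[Posz 1%N + 1]add0r E2 Eii subr0 add0r /c /mkc //.
have hx : (0 < m.+2)%N by [].
have hy : (m.+1 < m.+2)%N by [].
have hu : (1 %% m.+2 < m.+2)%N by rewrite ltn_mod.
have sk0 := @skein_s1 p m.+2 f (Ordinal hx) (Ordinal hy) (Ordinal hu) hsk erefl (ltn0Sn m) ltac:(simpl; nia).
have sk : f (Ordinal hx, Ordinal hy) * f (Ordinal hu, Ordinal hy) =
  genv p f 0%N 1 * genv p f (0 + m.+2)%N 1 +
  genv p f 1%N m.+1 * genv p f 0%N m.+3 := sk0.
clear sk0.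
rewrite (genv_big _ _ _ (_ : (m.+2 < m.+3)%N)) // !genv_small in sk; try lia.
rewrite -(@arcv_ord m.+2 f (Ordinal hx) (Ordinal hy) 0 erefl) in sk.
rewrite -(@arcv_ord m.+2 f (Ordinal hu) (Ordinal hy) 1 erefl) in sk.
have a1 : arcv f (0 + m.+3 - m.+2) (2 * m.+2 - m.+3) = arcv f 1 m.+1.
  have -> : (0 + m.+3 - m.+2)%N = 1%N by lia.
  have -> : (2 * m.+2 - m.+3)%N = m.+1 by lia.
  done.
have a2 : arcv f 0 (m.+3 - m.+2) = 1.
  have -> : (m.+3 - m.+2)%N = 1%N by lia.
  exact: arcv1.
rewrite a1 a2 !(arcv1 _ n0 hb) mul1r mulr1 (lam_good hg) in sk.
have sk2 : (E c 0 (0 + Posz m.+2))%:~R * (E c 1 (1 + Posz m.+2))%:~R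
  = 1 + (E c 1 (1 + Posz m.+1))%:~R * (l%:~R + (E c 1 (1 + Posz m.+1))%:~R) :> R.
  rewrite -(hR 0%N m.+2); last by lia.
  rewrite -(hR 1%N m.+2); last by lia.
  rewrite -(hR 1%N m.+1); last by lia.
  exact: sk.
have ie : E c 0 (0 + Posz m.+2) * E c 1 (1 + Posz m.+2)
  = 1 + E c 1 (1 + Posz m.+1) * E c 0 (Posz m.+2 + 1).
  rewrite (plucker c 0 1 (0 + Posz m.+2) (1 + Posz m.+2)) wronsk add0r.
  have -> : 1 + Posz m.+2 = Posz m.+2 + 1 by rewrite addrC.
  rewrite wronsk mul1r.
  have -> : (1 + Posz m.+1) = Posz m.+2 by lia.
  ring.
have C0 : 0 < E c 1 (1 + Posz m.+1).
  have [_ h] := @arcv_nat m.+2 f 1 m.+1 n0 ltac:(lia) hpos.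
  rewrite hR in h; last by lia.
  by rewrite ltr0z in h.
move: sk2; rewrite -!intrM ie intrD mulr1z -intrD intrM => /addrI /(mulfI _).
rewrite intr_eq0 lt0r_neq0 // => /(_ isT) /eqP; rewrite eqr_int => /eqP h.
rewrite trq_E // h.
have -> : Posz m.+2 = 1 + Posz m.+1 by lia.
ring.
Qed.



Lemma rel_pos n (f : orb_arc n -> R) c : (0 < n)%N -> is_period c n -> Rel f c ->
  (forall t, f t \in Num.nat /\ 0 < f t) ->
  forall i j, 0 < j - i <= Posz n -> 0 < E c i j.
Proof.
move=> n0 hp hR hf i j hij.
have hK := Eshift (period_mul `|i|%N hp) i j.
have ge : 0 <= i + Posz (`|i|%N * n)%N by rewrite PoszM; nia.
set a := absz (i + Posz (`|i|%N * n)%N).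
set L := absz (j - i).
have ea : Posz a = i + Posz (`|i|%N * n)%N by rewrite /a; lia.
have eb : Posz a + Posz L = j + Posz (`|i|%N * n)%N by rewrite /a /L; lia.
have [_ h] := @arcv_nat n f a L n0 ltac:(rewrite /L; lia) hf.
rewrite hR in h; last by rewrite /L; lia.
by rewrite ltr0z eb ea hK in h.
Qed.

Lemma posE c n p l : (0 < n)%N -> is_period c n -> trq c n = l -> good p l ->
  (forall i j, 0 < j - i <= Posz n -> 0 < E c i j) ->
  forall i j, 0 < j - i < Posz (p * n)%N -> 0 < E c i j.
Proof.
move=> n0 hp ht hg hb i j hij.
have l0 : 0 <= l by case: hg => [[_ ->]|[_ ->]].
have hpn : (p <= 3)%N by case: hg => [[-> _]|[-> _]].
have [g1|g1] := lerP (j - i) (Posz n); first by apply: hb; lia.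
have [g2|g2] := ltrP (j - i) (Posz (2 * n)%N).
  have := genv_id hp ht i (j - i); rewrite addrC subrK => ->.
  apply: ltr_wpDl.
    apply: mulr_ge0 => //; apply: ltW; apply: hb; lia.
  apply: hb; lia.
have ha := sym_anti hp ht hg.
have -> : j = (j - Posz (p * n)%N) + Posz (p * n)%N by rewrite subrK.
rewrite anti_E // Eanti opprK; apply: hb.
have : (p * n <= 3 * n)%N by rewrite leq_mul2r hpn orbT.
lia.
Qed.

Definition mkF (N : nat) (c : int -> int) : int -> int -> int :=
  fun i j => if (0 <= j - i) && (j - i <= Posz N) then E c i j else 0.

Lemma quid_mkF N c : (2 <= N)%N -> quid (mkF N c) = c.
Proof.
move=> N2; apply: functional_extensionality => i.
rewrite /quid /mkF.
have -> : (0 <= i + 1 - (i - 1)) && (i + 1 - (i - 1) <= Posz N) by apply/andP; split; lia.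
have -> : i + 1 = (i - 1) + 2 by rewrite -addrA.
by rewrite E2 subrK.
Qed.

Lemma fp_of_c c n p l : (0 < n)%N -> is_period c n -> trq c n = l -> good p l ->
  (forall i j, 0 < j - i <= Posz n -> 0 < E c i j) ->
  is_frieze_pattern (p * n)%N (mkF (p * n)%N c).
Proof.
move=> n0 hp ht hg hb.
have ha := sym_anti hp ht hg.
have p2 : (2 <= p)%N by case: hg => [[-> _]|[-> _]].
have N2 : (2 <= p * n)%N by nia.
have hpos := posE n0 hp ht hg hb.
rewrite /mkF; split.
- by move=> i j /negbTE ->.
- move=> i; split.
    by rewrite subrr lexx /= Eii.
  have -> : (0 <= i + Posz (p * n)%N - i) && (i + Posz (p * n)%N - i <= Posz (p * n)%N)
    by apply/andP; split; lia.
  by rewrite anti_E // Eii oppr0.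
- move=> i; split.
    have -> : (0 <= i + 1 - i) && (i + 1 - i <= Posz (p * n)%N) by apply/andP; split; lia.
    exact: wronsk.
  have -> : (0 <= i + Posz (p * n)%N - 1 - i) && (i + Posz (p * n)%N - 1 - i <= Posz (p * n)%N)
    by apply/andP; split; lia.
  have -> : i + Posz (p * n)%N - 1 = (i - 1) + Posz (p * n)%N by rewrite addrAC.
  rewrite anti_E // Eanti opprK.
  have -> : i = (i - 1) + 1 by rewrite subrK.
  by rewrite addrK wronsk.
- move=> i j hij.
  have -> : (0 <= j - i) && (j - i <= Posz (p * n)%N) by apply/andP; split; lia.
  have -> : (0 <= j + 1 - (i + 1)) && (j + 1 - (i + 1) <= Posz (p * n)%N) by apply/andP; split; lia.
  have -> : (0 <= j - (i + 1)) && (j - (i + 1) <= Posz (p * n)%N) by apply/andP; split; lia.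
  have -> : (0 <= j + 1 - i) && (j + 1 - i <= Posz (p * n)%N) by apply/andP; split; lia.
  rewrite (plucker c i (i + 1) j (j + 1)) !wronsk; ring.
- move=> i j hij.
  have -> : (0 <= j - i) && (j - i <= Posz (p * n)%N) by apply/andP; split; lia.
  exact: hpos.
Qed.

Lemma minp_exists c n : (0 < n)%N -> is_period c n -> exists p0, is_min_period c p0.
Proof.
move=> n0 hp.
pose P q := (0 < q)%N && [forall k : 'I_n, c (Posz k + Posz q) == c (Posz k)].
have hP : forall q, is_period c q -> (0 < q)%N -> P q.
  move=> q hq q0; rewrite /P q0 /=; apply/forallP => k; apply/eqP; exact: hq.
have exP : exists q, P q by exists n; apply: hP.
case: (ex_minnP exP) => p0 /andP[p00 /forallP hf] hmin.
exists p0; split => //; last by move=> q q0 hq; apply: hmin; apply: hP.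
move=> i.
have nz : Posz n != 0 by rewrite -lt0n.
have hr0 := modz_ge0 i nz; have hr1 := ltz_pmod i (n0 : 0 < Posz n).
have hk : (absz (i %% Posz n)%Z < n)%N by lia.
have e : i = (i %% Posz n)%Z + (i %/ Posz n)%Z * Posz n by rewrite addrC -divz_eq.
rewrite e -addrAC !period_int //.
have := eqP (hf (Ordinal hk)); rewrite /=.
by have -> : Posz (absz (i %% Posz n)%Z) = (i %% Posz n)%Z by lia.
Qed.

Lemma growth_of_c c n p l : (0 < n)%N -> is_period c n -> trq c n = l -> good p l ->
  (forall i j, 0 < j - i <= Posz n -> 0 < E c i j) ->
  has_growth (mkF (p * n)%N c) l.
Proof.
move=> n0 hp ht hg hb.
have p2 : (2 <= p)%N by case: hg => [[-> _]|[-> _]].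
have N2 : (2 <= p * n)%N by nia.
have ha := sym_anti hp ht hg.
have hpos := posE n0 hp ht hg hb.
rewrite /has_growth quid_mkF //.
have [p0 hmin] := minp_exists n0 hp.
exists p0; split => //.
have hmin' := hmin; case: hmin' => p00 hp0 _.
have /dvdnP [r hr] := minp_dvd hmin hp.
have ep : p0 = n.
  case: r hr => [|[|r]] hr; first by move: n0; rewrite hr.
    by rewrite hr mul1n.
  exfalso.
  have hposX : forall k : nat, (0 < k < p * n)%N -> 0 < X c (Posz k).
    by move=> k hk; rewrite -E0; apply: hpos; lia.
  have hXN : X c (Posz (p * n)%N) = 0.
    by rewrite -E0 -[Posz (p * n)%N]add0r anti_E // Eii oppr0.
  apply: (GL hp0 p00 hposX hXN (m := (p * r.+2)%N)); first by rewrite hr mulnA.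
  nia.
rewrite !tameE quid_mkF // ep.
rewrite -ht trq_E // add0r; congr (_ - _); first by rewrite addrC.
by congr E; case: n n0 {hp ht hb hpos ha hmin hr hp0 p00 N2 ep} => // n _ /=; lia.
Qed.



Lemma lhs_rel p l n F : good p l -> (0 < n)%N -> is_frieze_pattern (p * n)%N F ->
  has_growth F l -> Rel (@mkf n F) (quid F).
Proof.
move=> hg n0 hF hgr.
have [hp ht] := lhs_period hg n0 hF hgr.
have p2 : (2 <= p)%N by case: hg => [[-> _]|[-> _]].
have N0 : (0 < p * n)%N by rewrite muln_gt0 n0; lia.
have hFE := fr_E hF N0.
have nN : (n < p * n)%N by rewrite -{1}(mul1n n) ltn_pmul2r; lia.
move=> a L hL.
have hx : (a %% n < n)%N by rewrite ltn_mod.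
have hy : (L.-1 < n)%N by lia.
have -> : L = (Ordinal hy).+1 by rewrite /=; lia.
rewrite (@arcv_ord n (@mkf n F) (Ordinal hx) (Ordinal hy) a erefl) /mkf /=.
rewrite hFE; last by lia.
rewrite -addrA -(@Eshift_mod _ n a) //; congr (E _ _ _)%:~R; lia.
Qed.

Lemma sig_ext (A : Type) (P : A -> Prop) (x y : {a | P a}) : sval x = sval y -> x = y.
Proof.
case: x => a pa; case: y => b pb /= e; subst b.
by rewrite (proof_irrelevance _ pa pb).
Qed.

Lemma mkc_mkf p l n F : good p l -> (0 < n)%N -> is_frieze_pattern (p * n)%N F ->
  has_growth F l -> @mkc n l (@mkf n F) = quid F.
Proof.
move=> hg n0 hF hgr.
have [hp ht] := lhs_period hg n0 hF hgr.
apply: functional_extensionality => i; rewrite /mkc.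
case: ifP => [/eqP n1|n1].
  subst n; rewrite muln1 in hF; rewrite /quid.
  case: hF => _ h0 h1 _ _.
  case: hg h0 h1 => [[-> ->]|[-> ->]] h0 h1.
    have := (h0 (i - 1)).2; rewrite (_ : i - 1 + Posz 2 = i + 1) //.
    by rewrite -addrA.
  have := (h1 (i - 1)).2; rewrite (_ : i - 1 + Posz 3 - 1 = i + 1) //.
  by rewrite -!addrA; congr (_ + _).
have hR := lhs_rel hg n0 hF hgr.
rewrite hR; last by lia.
rewrite intrKfloor.
have nz : Posz n != 0 by rewrite -lt0n.
have hr0 := modz_ge0 (i - 1) nz.
have -> : Posz (absz ((i - 1) %% Posz n)%Z) = ((i - 1) %% Posz n)%Z by lia.
rewrite E2.
have e : i = ((i - 1) %% Posz n)%Z + 1 + ((i - 1) %/ Posz n)%Z * Posz n.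
  by rewrite addrAC (addrC ((i - 1) %% Posz n)%Z) -divz_eq subrK.
by rewrite [in RHS]e period_int.
Qed.

Lemma mkF_quid p n F : (0 < p * n)%N -> is_frieze_pattern (p * n)%N F -> mkF (p * n)%N (quid F) = F.
Proof.
move=> N0 hF; apply: functional_extensionality => i; apply: functional_extensionality => j.
rewrite /mkF; case: ifP => h.
  by rewrite (fr_E hF N0) //.
by case: hF => hz _ _ _ _; rewrite hz // h.
Qed.

Lemma main_gen p l n : good p l -> (0 < n)%N ->
  exists phi : {F : int -> int -> int | is_frieze_pattern (p * n)%N F /\ has_growth F l} ->
               {f : orb_arc n -> R | orb_frieze p n f},
    bijective phi.
Proof.
move=> hg n0.
have p2 : (2 <= p)%N by case: hg => [[-> _]|[-> _]].
have N0 : (0 < p * n)%N by rewrite muln_gt0 n0; lia.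
pose phi (x : {F : int -> int -> int | is_frieze_pattern (p * n)%N F /\ has_growth F l}) :
  {f : orb_arc n -> R | orb_frieze p n f} :=
  exist _ (@mkf n (sval x)) (lhs_orb hg n0 (proj1 (svalP x)) (proj2 (svalP x))).
have Hpsi : forall y : {f : orb_arc n -> R | orb_frieze p n f},
    is_frieze_pattern (p * n)%N (mkF (p * n)%N (@mkc n l (sval y))) /\
    has_growth (mkF (p * n)%N (@mkc n l (sval y))) l.
  move=> [f hf] /=.
  have hper := @mkc_period n l f n0.
  have ht := rhs_trq hg n0 hf.
  have hR := rhs_rel hg n0 hf.
  have hb : forall i j, 0 < j - i <= Posz n -> 0 < E (@mkc n l f) i j.
    by case: hf => _ _ hpos; exact: (rel_pos n0 hper hR hpos).
  split; [exact: (fp_of_c n0 hper ht hg hb) | exact: (growth_of_c n0 hper ht hg hb)].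
pose psi (y : {f : orb_arc n -> R | orb_frieze p n f}) :
  {F : int -> int -> int | is_frieze_pattern (p * n)%N F /\ has_growth F l} :=
  exist _ (mkF (p * n)%N (@mkc n l (sval y))) (Hpsi y).
exists phi; exists psi.
- move=> [F [hF hgr]]; apply: sig_ext => /=.
  by rewrite (mkc_mkf hg n0 hF hgr) mkF_quid.
- move=> [f hf]; apply: sig_ext => /=.
  have hR := rhs_rel hg n0 hf.
  apply: functional_extensionality => t; rewrite /mkf /mkF.
  have -> : (0 <= Posz t.1 + Posz t.2 + 1 - Posz t.1) &&
            (Posz t.1 + Posz t.2 + 1 - Posz t.1 <= Posz (p * n)%N).
    have := ltn_ord t.2; have : (n <= p * n)%N by rewrite leq_pmull //; lia.
    move=> h1 h2; apply/andP; split; lia.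
  rewrite [in f t](surjective_pairing t) -(@arcv_ord n f t.1 t.2 t.1 (modn_small (ltn_ord _))) hR; last first.
    by have := ltn_ord t.2; lia.
  by congr (E _ _ _)%:~R; lia.
Qed.

Theorem corollary4p32 :
  (forall n : nat, (0 < n)%N ->
     exists phi : {F : int -> int -> int | is_frieze_pattern (2 * n)%N F /\ has_growth F 0} ->
                  {f : orb_arc n -> R | orb_frieze 2 n f},
       bijective phi)
  /\
  (forall n : nat, (0 < n)%N ->
     exists phi : {F : int -> int -> int | is_frieze_pattern (3 * n)%N F /\ has_growth F 1} ->
                  {f : orb_arc n -> R | orb_frieze 3 n f},
       bijective phi).
Proof.
split=> n n0; apply: main_gen => //; rewrite /good; [left | right]; split => //.
Qed.
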